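(* For real $r,\omega$ with $\sinh^22r+\sin^22\omega>0$ define $$\rho^{\natural}(r,\omega)=\frac{\cosh2r-\cos2\omega}{\cosh2r+\cos2\omega},$$ and $\theta^{\natural}(r,\omega)$ (mod $2\pi$) by $$\cos\theta^{\natural}=\frac{\sinh^22r-\sin^22\omega}{\sinh^22r+\sin^22\omega},\qquad \sin\theta^{\natural}=\frac{2\sinh2r\sin2\omega}{\sinh^22r+\sin^22\omega}$$ (so that $\tan(\theta^{\natural}/2)=\sin2\omega/\sinh2r$), and for $\phi\in\mathbb{R}$ set $\mathrm{trh}^{\natural}(r,\omega;\phi)=\rho^{\natural}(r,\omega)\cos(\phi+\theta^{\natural}(r,\omega))$. Then for $|r|<1$ and all $i,j\ge0$, uniformly in $\phi$, $$\frac{\partial^{i+j}\,\mathrm{trh}^{\natural}(r,\omega;\phi)}{\partial r^i\partial\omega^j}\ll_{i,j}\frac{\rho^{\natural}(r,\omega)}{(\cosh^22r-\cos^22\omega)^{(i+j)/2}}.$$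
   Context: Note that $\cosh^22r-\cos^22\omega=\sinh^22r+\sin^22\omega$. *)

(* Defs.v *)
From Stdlib Require Import Reals ClassicalEpsilon.
From Coquelicot Require Import Coquelicot.
Open Scope R_scope.

Definition rho_nat (r w : R) : R :=
  (cosh (2 * r) - cos (2 * w)) / (cosh (2 * r) + cos (2 * w)).

Definition cos_theta_nat (r w : R) : R :=
  (sinh (2 * r) ^ 2 - sin (2 * w) ^ 2) / (sinh (2 * r) ^ 2 + sin (2 * w) ^ 2).
Definition sin_theta_nat (r w : R) : R :=
  2 * sinh (2 * r) * sin (2 * w) / (sinh (2 * r) ^ 2 + sin (2 * w) ^ 2).

Definition theta_nat (r w : R) : R :=
  epsilon (inhabits 0)
    (fun t => cos t = cos_theta_nat r w /\ sin t = sin_theta_nat r w).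

Definition trh_nat (r w phi : R) : R :=
  rho_nat r w * cos (phi + theta_nat r w).

Definition partial_rw (f : R -> R -> R) (i j : nat) (r w : R) : R :=
  Derive_n (fun r' => Derive_n (fun w' => f r' w') j w) i r.

(* Main.v *)
Require Import Defs.
From Stdlib Require Import Reals Lra Lia Nsatz ClassicalEpsilon.
From Coquelicot Require Import Coquelicot.
Open Scope R_scope.

Lemma ch_sh x : cosh x ^ 2 = 1 + sinh x ^ 2.
Proof. unfold cosh, sinh. rewrite exp_Ropp. assert (exp x > 0) by apply exp_pos. field. lra. Qed.
Lemma ch_pos x : 0 < cosh x.
Proof. unfold cosh. assert (exp x > 0) by apply exp_pos. assert (exp (-x) > 0) by apply exp_pos. lra. Qed.
Lemma ch_ge1 x : 1 <= cosh x.
Proof. pose proof (ch_sh x). pose proof (ch_pos x). nra. Qed.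
Lemma cs1 x : cos x ^ 2 + sin x ^ 2 = 1.
Proof. pose proof (sin2_cos2 x). unfold Rsqr in H. lra. Qed.

Definition Dn (r w : R) := cosh (2*r) + cos (2*w).
Definition Tz (r w : R) : C := (sinh (2*r) / Dn r w, sin (2*w) / Dn r w).
Definition Pset (r w : R) := 0 < sinh (2*r)^2 + sin (2*w)^2.

Lemma Dn_pos r w : Pset r w -> 0 < Dn r w.
Proof.
  unfold Pset, Dn. intros H. pose proof (ch_sh (2*r)). pose proof (cs1 (2*w)).
  pose proof (ch_ge1 (2*r)). pose proof (COS_bound (2*w)).
  assert ((cosh (2*r) + cos (2*w)) * (cosh (2*r) - cos (2*w)) = sinh (2*r)^2 + sin (2*w)^2) by nra.
  nra.
Qed.
Lemma Dm_pos r w : Pset r w -> 0 < cosh (2*r) - cos (2*w).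
Proof.
  intros H. pose proof (Dn_pos r w H). unfold Pset, Dn in *. pose proof (ch_sh (2*r)). pose proof (cs1 (2*w)).
  assert ((cosh (2*r) + cos (2*w)) * (cosh (2*r) - cos (2*w)) = sinh (2*r)^2 + sin (2*w)^2) by nra.
  nra.
Qed.

Definition one : C := (1, 0).
Definition Ci : C := (0, 1).

Definition cder (f : R -> C) (x : R) (z : C) :=
  is_derive (fun t => fst (f t)) x (fst z) /\ is_derive (fun t => snd (f t)) x (snd z).

Lemma cder_Tr r w : Pset r w ->
  cder (fun r => Tz r w) r (Cminus one (Cmult (Tz r w) (Tz r w))).
Proof.
  intros HP. pose proof (Dn_pos r w HP). unfold Dn in H.
  pose proof (ch_sh (2*r)). pose proof (cs1 (2*w)).
  split; unfold Tz, Dn; simpl; auto_derive; try lra; field_simplify_eq; try nsatz; lra.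
Qed.
Lemma cder_Tw r w : Pset r w ->
  cder (fun w => Tz r w) w (Cmult Ci (Cminus one (Cmult (Tz r w) (Tz r w)))).
Proof.
  intros HP. pose proof (Dn_pos r w HP). unfold Dn in H.
  pose proof (ch_sh (2*r)). pose proof (cs1 (2*w)).
  split; unfold Tz, Dn; simpl; auto_derive; try lra; field_simplify_eq; try nsatz; lra.
Qed.

Lemma cder_ext f x a b : cder f x a -> a = b -> cder f x b.
Proof. intros H ->; exact H. Qed.
Lemma isd_eq (f : R -> R) x a b : is_derive f x a -> a = b -> is_derive f x b.
Proof. intros H ->; exact H. Qed.

Lemma isd_plus f g x a b : is_derive f x a -> is_derive g x b -> is_derive (fun t => f t + g t) x (a + b).
Proof. intros. apply (is_derive_plus f g x a b); auto. Qed.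
Lemma isd_minus f g x a b : is_derive f x a -> is_derive g x b -> is_derive (fun t => f t - g t) x (a - b).
Proof. intros. apply (is_derive_minus f g x a b); auto. Qed.
Lemma isd_mult f g x a b : is_derive f x a -> is_derive g x b -> is_derive (fun t => f t * g t) x (a * g x + f x * b).
Proof. intros. apply (is_derive_mult f g x a b); auto. intros; apply Rmult_comm. Qed.
Lemma isd_const (c : R) x : is_derive (fun _ => c) x 0.
Proof. apply (is_derive_const c x). Qed.

Lemma cder_const c x : cder (fun _ => c) x (0,0).
Proof. split; simpl; apply isd_const. Qed.

Lemma cder_plus f g x a b : cder f x a -> cder g x b -> cder (fun t => Cplus (f t) (g t)) x (Cplus a b).
Proof. intros [H1 H2] [H3 H4]; split; simpl; [apply (isd_plus (fun t => fst (f t)) (fun t => fst (g t))) | apply (isd_plus (fun t => snd (f t)) (fun t => snd (g t)))]; auto. Qed.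

Lemma cder_mult f g x a b : cder f x a -> cder g x b ->
  cder (fun t => Cmult (f t) (g t)) x (Cplus (Cmult a (g x)) (Cmult (f x) b)).
Proof.
  intros [H1 H2] [H3 H4]; split; simpl.
  - eapply isd_eq. apply (isd_minus (fun t => fst (f t) * fst (g t)) (fun t => snd (f t) * snd (g t)));
      apply isd_mult; eauto. simpl; ring.
  - eapply isd_eq. apply (isd_plus (fun t => fst (f t) * snd (g t)) (fun t => snd (f t) * fst (g t)));
      apply isd_mult; eauto. simpl; ring.
Qed.

Fixpoint peval (Q : list C) (z : C) : C :=
  match Q with nil => (0,0) | c :: Q' => Cplus c (Cmult z (peval Q' z)) end.
Fixpoint padd (A B : list C) : list C :=
  match A, B with nil, _ => B | _, nil => A | a :: A', b :: B' => Cplus a b :: padd A' B' end.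
Fixpoint pder (Q : list C) : list C :=
  match Q with nil => nil | c :: Q' =>
    match Q' with nil => nil | _ => padd Q' ((0,0) :: pder Q') end end.
Definition pm (Q : list C) := padd Q ((0,0) :: (0,0) :: map Copp Q).
Fixpoint Pn (n : nat) : list C :=
  match n with O => (0,0) :: (0,0) :: (1,0) :: nil | S n => pm (pder (Pn n)) end.

Ltac cring := repeat match goal with
  | [ z : C |- _ ] => destruct z
  end; unfold Cplus, Cmult, Copp, Cminus, one, Ci; simpl;
  match goal with |- (_,_) = (_,_) => f_equal; ring | _ => ring end.

Lemma peval_padd A B z : peval (padd A B) z = Cplus (peval A z) (peval B z).
Proof.
  revert B; induction A as [|a A IH]; intros [|b B]; simpl.
  - cring.
  - generalize (peval B z); intros; cring.
  - generalize (peval A z); intros; cring.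
  - rewrite IH. generalize (peval A z) (peval B z); intros; cring.
Qed.
Lemma peval_opp Q z : peval (map Copp Q) z = Copp (peval Q z).
Proof. induction Q as [|c Q IH]; simpl. cring. rewrite IH. generalize (peval Q z); intros; cring. Qed.
Lemma peval_pm Q z : peval (pm Q) z = Cmult (peval Q z) (Cminus one (Cmult z z)).
Proof. unfold pm. rewrite peval_padd. simpl. rewrite peval_opp. generalize (peval Q z); intros; cring. Qed.

Lemma pder_cons2 c c' Q : pder (c :: c' :: Q) = padd (c' :: Q) ((0,0) :: pder (c' :: Q)).
Proof. reflexivity. Qed.
Lemma peval_cons a L z : peval (a :: L) z = Cplus a (Cmult z (peval L z)).
Proof. reflexivity. Qed.

Lemma pder_aux c Q z d : Cplus (0,0) (Cplus (Cmult d (peval Q z)) (Cmult z (Cmult (peval (pder Q) z) d))) = Cmult (peval (pder (c::Q)) z) d.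
Proof.
    destruct Q as [|c' Q'].
    + simpl. cring.
    + rewrite pder_cons2, peval_padd, (peval_cons (0,0)).
      generalize (peval (c' :: Q') z) (peval (pder (c' :: Q')) z). intros; cring.
Qed.

Lemma cder_peval Q f x d : cder f x d ->
  cder (fun t => peval Q (f t)) x (Cmult (peval (pder Q) (f x)) d).
Proof.
  intros Hf. induction Q as [|c Q IH].
  - simpl. eapply cder_ext. apply cder_const. cring.
  - change (cder (fun t => Cplus c (Cmult (f t) (peval Q (f t)))) x (Cmult (peval (pder (c::Q)) (f x)) d)).
    eapply cder_ext. apply cder_plus. apply cder_const. apply cder_mult. exact Hf. exact IH.
    apply pder_aux.
Qed.

Lemma cder_cmul c f x d : cder f x d -> cder (fun t => Cmult c (f t)) x (Cmult c d).
Proof. intros H. eapply cder_ext. apply cder_mult. apply cder_const. exact H. cring. Qed.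

Definition Fv (c : C) (Q : list C) (r w : R) : R := fst (Cmult c (peval Q (Tz r w))).

Lemma Fv_der_r c Q r w : Pset r w -> is_derive (fun r => Fv c Q r w) r (Fv c (pm (pder Q)) r w).
Proof.
  intros HP. unfold Fv. rewrite peval_pm.
  apply (cder_cmul c _ _ _ (cder_peval Q _ _ _ (cder_Tr r w HP))).
Qed.
Lemma Fv_der_w c Q r w : Pset r w -> is_derive (fun w => Fv c Q r w) w (Fv (Cmult c Ci) (pm (pder Q)) r w).
Proof.
  intros HP. unfold Fv. rewrite peval_pm.
  eapply isd_eq. apply (cder_cmul c _ _ _ (cder_peval Q _ _ _ (cder_Tw r w HP))).
  generalize (peval (pder Q) (Tz r w)) (Tz r w). intros. cring.
Qed.

Lemma Dn_family (P : R -> Prop) (Popen : forall x, P x -> locally x P)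
  (G : nat -> R -> R) (HG : forall k x, P x -> is_derive (G k) x (G (S k) x))
  (f : R -> R) (Hf : forall x, P x -> f x = G O x) :
  forall n x, P x -> Derive_n f n x = G n x.
Proof.
  induction n as [|n IH]; intros x Hx.
  - simpl. auto.
  - simpl. rewrite (Derive_ext_loc _ (G n)).
    + apply is_derive_unique. auto.
    + generalize (Popen x Hx). apply filter_imp. intros y Hy. auto.
Qed.

Lemma loc_pos (f : R -> R) x : ex_derive f x -> 0 < f x -> locally x (fun y => 0 < f y).
Proof.
  intros Hd Hp. apply ex_derive_continuous in Hd.
  apply Hd. exists (mkposreal _ Hp). intros y Hy. simpl in *.
  unfold ball in Hy; simpl in Hy; unfold AbsRing_ball, abs, minus, plus, opp in Hy; simpl in Hy.
  apply Rabs_def2 in Hy. lra.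
Qed.

Lemma Pset_open_r w r : Pset r w -> locally r (fun r' => Pset r' w).
Proof. intros H. apply (loc_pos (fun r' => sinh (2*r')^2 + sin (2*w)^2)); auto. auto_derive; auto. Qed.
Lemma Pset_open_w r w : Pset r w -> locally w (fun w' => Pset r w').
Proof. intros H. apply (loc_pos (fun w' => sinh (2*r)^2 + sin (2*w')^2)); auto. auto_derive; auto. Qed.

Lemma angle_exists c s : c^2 + s^2 = 1 -> exists t, cos t = c /\ sin t = s.
Proof.
  intros H. assert (Hc : -1 <= c <= 1) by nra.
  assert (Hs : sqrt (1 - c²) = Rabs s).
  { rewrite <- sqrt_Rsqr_abs. f_equal. unfold Rsqr. nra. }
  destruct (Rle_or_lt 0 s) as [Hs0|Hs0].
  - exists (acos c). split. apply cos_acos; auto. rewrite sin_acos; auto. rewrite Hs, Rabs_pos_eq; auto.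
  - exists (- acos c). split. rewrite cos_neg. apply cos_acos; auto.
    rewrite sin_neg, sin_acos; auto. rewrite Hs, Rabs_left; auto. ring.
Qed.

Definition c0 (phi : R) : C := (cos phi, sin phi).

Lemma trh_eq r w phi : Pset r w -> trh_nat r w phi = Fv (c0 phi) (Pn 0) r w.
Proof.
  intros HP. pose proof (Dn_pos r w HP) as HD. pose proof (Dm_pos r w HP) as HM.
  unfold Pset, Dn in *.
  pose proof (ch_sh (2*r)). pose proof (cs1 (2*w)).
  unfold trh_nat, theta_nat.
  destruct (epsilon_spec (inhabits 0) (fun t => cos t = cos_theta_nat r w /\ sin t = sin_theta_nat r w)) as [E1 E2].
  { apply angle_exists. unfold cos_theta_nat, sin_theta_nat. field_simplify_eq. ring. lra. }
  rewrite cos_plus, E1, E2. unfold Fv, c0, Tz, Dn, rho_nat, cos_theta_nat, sin_theta_nat. simpl.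
  field_simplify_eq; [ rewrite H; replace (cos (2*w)^2) with (1 - sin(2*w)^2) by lra; ring | ]. split; try lra; nra.
Qed.

Fixpoint ci (c : C) (k : nat) : C := match k with O => c | S k => Cmult (ci c k) Ci end.

Lemma inner_eq r' w phi j : Pset r' w ->
  Derive_n (fun w' => trh_nat r' w' phi) j w = Fv (ci (c0 phi) j) (Pn j) r' w.
Proof.
  intros HP.
  apply (Dn_family (fun w => Pset r' w) (Pset_open_w r') (fun k w => Fv (ci (c0 phi) k) (Pn k) r' w)).
  - intros k x Hx. apply (Fv_der_w (ci (c0 phi) k) (Pn k) r' x Hx).
  - intros x Hx. apply trh_eq; auto.
  - exact HP.
Qed.

Lemma outer_eq r w phi i j : Pset r w ->
  partial_rw (fun r' w' => trh_nat r' w' phi) i j r w = Fv (ci (c0 phi) j) (Pn (j + i)) r w.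
Proof.
  intros HP. unfold partial_rw.
  apply (Dn_family (fun r => Pset r w) (fun r H => Pset_open_r w r H) (fun k r => Fv (ci (c0 phi) j) (Pn (j + k)) r w)).
  - intros k x Hx. rewrite Nat.add_succ_r. apply (Fv_der_r _ (Pn (j + k)) x w Hx).
  - intros x Hx. rewrite Nat.add_0_r. apply inner_eq; auto.
  - exact HP.
Qed.

Fixpoint Sm (Q : list C) : R := match Q with nil => 0 | c :: Q => Cmod c + Sm Q end.
Lemma Sm_ge0 Q : 0 <= Sm Q.
Proof. induction Q; simpl. lra. pose proof (Cmod_ge_0 a). lra. Qed.

Lemma Cmod_00 : Cmod (0,0) = 0.
Proof. apply Cmod_0. Qed.

Lemma peval_bound Q z : Cmod (peval Q z) <= Sm Q * (1 + Cmod z) ^ (pred (length Q)).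
Proof.
  induction Q as [|c Q IH].
  - simpl. rewrite Cmod_00. lra.
  - pose proof (Cmod_ge_0 z) as Hz. pose proof (Sm_ge0 Q). pose proof (Cmod_ge_0 c).
    destruct Q as [|c' Q'].
    + simpl. replace (Cplus c (Cmult z (0,0))) with c by cring. lra.
    + change (Cmod (Cplus c (Cmult z (peval (c' :: Q') z))) <= (Cmod c + Sm (c' :: Q')) * (1 + Cmod z) ^ (S (pred (length (c' :: Q'))))).
      simpl pred in *. simpl pow.
      set (p := (1 + Cmod z) ^ length Q') in *.
      assert (1 <= p) by (apply pow_R1_Rle; lra).
      eapply Rle_trans. apply Cmod_triangle. rewrite Cmod_mult.
      assert (Cmod z * Cmod (peval (c' :: Q') z) <= Cmod z * (Sm (c' :: Q') * p)) by (apply Rmult_le_compat_l; auto).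
      assert (1 <= (1 + Cmod z) * p) by nra.
      assert (0 <= Cmod c * ((1 + Cmod z) * p - 1)) by (apply Rmult_le_pos; lra).
      assert (0 <= Sm (c' :: Q') * p) by nra.
      nra.
Qed.

Lemma padd_len A B : length (padd A B) = Nat.max (length A) (length B).
Proof. revert B; induction A; intros [|b B]; simpl; auto. Qed.
Lemma pder_len Q : (length (pder Q) <= pred (length Q))%nat.
Proof.
  induction Q as [|c Q IH]; simpl. lia.
  destruct Q as [|c' Q']. simpl; lia.
  rewrite padd_len. simpl in *. lia.
Qed.
Lemma Pn_len n : (length (Pn n) <= n + 3)%nat.
Proof.
  induction n; simpl. lia. unfold pm. rewrite padd_len. simpl. rewrite length_map.
  pose proof (pder_len (Pn n)). lia.
Qed.

Lemma fst_le_Cmod z : Rabs (fst z) <= Cmod z.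
Proof. apply re_le_Cmod. Qed.

Lemma Cmod_ci phi k : Cmod (ci (c0 phi) k) = 1.
Proof.
  induction k; simpl.
  - unfold c0, Cmod; simpl fst; simpl snd. rewrite cs1. apply sqrt_1.
  - rewrite Cmod_mult, IHk. unfold Ci, Cmod; simpl fst; simpl snd. replace (0 ^ 2 + 1 ^ 2) with 1 by ring. rewrite sqrt_1. ring.
Qed.

Lemma Cmod_sq z : Cmod (Cmult z z) = Cmod z ^ 2.
Proof. rewrite Cmod_mult. ring. Qed.
Lemma Cmod_one : Cmod one = 1.
Proof. unfold one, Cmod; simpl fst; simpl snd. replace (1 ^ 2 + 0 ^ 2) with 1 by ring. apply sqrt_1. Qed.

Lemma key_ineq z : Cmod z ^ 2 <= 1 + Cmod (Cminus one (Cmult z z)).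
Proof.
  rewrite <- Cmod_sq.
  replace (Cmult z z) with (Cplus one (Copp (Cminus one (Cmult z z)))) at 1 by cring.
  eapply Rle_trans. apply Cmod_triangle. rewrite Cmod_opp, Cmod_one. lra.
Qed.

Lemma mixD z D : 0 < D -> D <= 10 -> Cmod (Cminus one (Cmult z z)) * D = 2 ->
  (1 + Cmod z) ^ 2 * D <= 90.
Proof.
  intros HD HD10 Hu. pose proof (key_ineq z). pose proof (Cmod_ge_0 z).
  set (t := Cmod z) in *. set (u := Cmod (Cminus one (Cmult z z))) in *.
  destruct (Rle_or_lt t 2).
  - assert ((1 + t)^2 <= 9) by nra. nra.
  - assert ((1 + t)^2 <= 3 * (t^2 - 1)) by nra.
    assert (3 * (t^2 - 1) * D <= 3 * u * D) by nra. nra.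
Qed.

Lemma Pn_bound n : exists K, 0 <= K /\ forall z D, 0 < D -> D <= 10 ->
  Cmod (Cminus one (Cmult z z)) * D = 2 -> 0 < Cmod z ->
  Cmod (peval (Pn n) z) * (Cmod z * D) ^ n <= K * Cmod z ^ 2.
Proof.
  destruct n as [|[|m]].
  - exists 1. split. lra. intros z D _ _ _ _.
    replace (peval (Pn 0) z) with (Cmult z z) by (simpl; cring). rewrite Cmod_sq. simpl. lra.
  - exists 4. split. lra. intros z D _ _ Hu _.
    replace (peval (Pn 1) z) with (Cmult (RtoC 2) (Cmult z (Cminus one (Cmult z z)))) by (simpl; cring).
    rewrite !Cmod_mult, Cmod_R, Rabs_pos_eq by lra. simpl.
    replace (2 * (Cmod z * Cmod (Cminus one (Cmult z z))) * (Cmod z * D * 1)) with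
      (2 * Cmod z * Cmod z * (Cmod (Cminus one (Cmult z z)) * D)) by ring.
    rewrite Hu. lra.
  - set (n := S (S m)).
    exists (Sm (Pn n) * 90 ^ n). split.
    { apply Rmult_le_pos. apply Sm_ge0. apply pow_le. lra. }
    intros z D HD HD10 Hu Ht.
    pose proof (mixD z D HD HD10 Hu) as Hmix.
    set (t := Cmod z) in *. set (s := 1 + t).
    set (A := Sm (Pn n)).
    assert (HA : 0 <= A) by apply Sm_ge0.
    assert (HP : Cmod (peval (Pn n) z) <= A * s ^ (m + 4)).
    { eapply Rle_trans. apply peval_bound. apply Rmult_le_compat_l. auto.
      apply Rle_pow. unfold s, t; pose proof (Cmod_ge_0 z); lra.
      pose proof (Pn_len n). unfold n in *. lia. }
    assert (Hs : 0 <= t <= s) by (unfold s; lra).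
    assert (E1 : (t * D) ^ n = t ^ 2 * (t ^ m * D ^ n)).
    { rewrite Rpow_mult_distr. unfold n. replace (S (S m)) with (m + 2)%nat by lia. rewrite pow_add. ring. }
    assert (E2 : s ^ (m + 4) * s ^ m = (s ^ 2) ^ n).
    { rewrite <- pow_add, <- pow_mult. f_equal. unfold n. lia. }
    assert (Htm : t ^ m <= s ^ m) by (apply pow_incr; lra).
    assert (Hq : (s ^ 2 * D) ^ n <= 90 ^ n).
    { apply pow_incr. split. apply Rmult_le_pos. apply pow_le. lra. lra. exact Hmix. }
    rewrite Rpow_mult_distr in Hq.
    assert (0 <= (t * D) ^ n) by (apply pow_le; apply Rmult_le_pos; lra).
    assert (0 <= s ^ (m + 4)) by (apply pow_le; lra).
    assert (0 <= D ^ n) by (apply pow_le; lra).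
    assert (0 <= t ^ m) by (apply pow_le; lra).
    assert (0 <= t ^ 2) by (apply pow_le; lra).
    eapply Rle_trans. apply Rmult_le_compat_r. auto. exact HP.
    rewrite E1.
    apply Rle_trans with (A * t ^ 2 * (s ^ (m + 4) * s ^ m * D ^ n)).
    { replace (A * s ^ (m + 4) * (t ^ 2 * (t ^ m * D ^ n))) with (A * t ^ 2 * (s ^ (m + 4) * (t ^ m * D ^ n))) by ring.
      apply Rmult_le_compat_l. apply Rmult_le_pos; auto.
      rewrite Rmult_assoc. apply Rmult_le_compat_l. auto. apply Rmult_le_compat_r; auto. }
    rewrite E2. replace (A * 90 ^ n * t ^ 2) with (A * t ^ 2 * 90 ^ n) by ring.
    apply Rmult_le_compat_l. apply Rmult_le_pos; auto. exact Hq.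
Qed.

Lemma rho_t r w : Pset r w -> Cmod (Tz r w) ^ 2 = rho_nat r w.
Proof.
  intros HP. pose proof (Dn_pos r w HP) as HD. pose proof (Dm_pos r w HP) as HM.
  unfold Pset, Dn in *. pose proof (ch_sh (2*r)). pose proof (cs1 (2*w)).
  rewrite Cmod2_alt. unfold Tz, rho_nat, Dn; simpl Re; simpl Im.
  field_simplify_eq; [ | lra].
  rewrite H. replace (sin (2*w)^2) with (1 - cos (2*w)^2) by lra. ring.
Qed.

Lemma u_D r w : Pset r w -> Cmod (Cminus one (Cmult (Tz r w) (Tz r w))) * Dn r w = 2.
Proof.
  intros HP. pose proof (Dn_pos r w HP) as HD.
  assert (E : Cmod (Cminus one (Cmult (Tz r w) (Tz r w))) ^ 2 = (2 / Dn r w) ^ 2).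
  { unfold Pset, Dn in *. pose proof (ch_sh (2*r)). pose proof (cs1 (2*w)).
    rewrite Cmod2_alt. unfold Tz, Dn, one, Cminus, Cplus, Copp, Cmult; simpl Re; simpl Im; simpl fst; simpl snd.
    field_simplify_eq; [ | lra].
    clear HP HD. revert H H0. generalize (cosh (2*r)) (sinh (2*r)) (cos (2*w)) (sin (2*w)).
    intros a b c d H1 H2. cbn [pow] in *. nsatz. }
  rewrite <- (sqrt_pow2 (Cmod _)) by apply Cmod_ge_0. rewrite E, sqrt_pow2.
  field. lra. apply Rlt_le, Rdiv_lt_0_compat; lra.
Qed.

Lemma D_le10 r w : Rabs r < 1 -> Dn r w <= 10.
Proof.
  intros Hr. apply Rabs_def2 in Hr. unfold Dn, cosh.
  pose proof (COS_bound (2*w)).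
  assert (exp 2 <= 9).
  { replace 2 with (1 + 1) by ring. rewrite exp_plus. pose proof exp_le_3. pose proof (exp_pos 1). nra. }
  assert (exp (2*r) <= exp 2) by (apply Rlt_le, exp_increasing; lra).
  assert (exp (-(2*r)) <= exp 2) by (apply Rlt_le, exp_increasing; lra).
  lra.
Qed.

Theorem mainTheorem7 :
  forall i j : nat, exists C : R, 0 <= C /\
    forall r w phi : R,
      Rabs r < 1 ->
      0 < sinh (2 * r) ^ 2 + sin (2 * w) ^ 2 ->
      Rabs (partial_rw (fun r' w' => trh_nat r' w' phi) i j r w)
        <= C * rho_nat r w /
           Rpower (cosh (2 * r) ^ 2 - cos (2 * w) ^ 2) (INR (i + j) / 2).
Proof.
  intros i j. destruct (Pn_bound (i + j)) as [K [HK HB]].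
  exists K. split; auto. intros r w phi Hr HP.
  change (Pset r w) in HP.
  rewrite outer_eq by auto. rewrite (Nat.add_comm j i).
  pose proof (Dn_pos r w HP) as HD. pose proof (D_le10 r w Hr) as HD10.
  pose proof (u_D r w HP) as Hu. pose proof (rho_t r w HP) as Hrho.
  pose proof (Dm_pos r w HP) as HM.
  set (T := Tz r w) in *. set (D := Dn r w) in *. set (t := Cmod T) in *.
  assert (Hrp : 0 < rho_nat r w).
  { unfold rho_nat. apply Rdiv_lt_0_compat; auto. }
  assert (Ht : 0 < t).
  { assert (0 <= t) by apply Cmod_ge_0. nra. }
  assert (HX : cosh (2 * r) ^ 2 - cos (2 * w) ^ 2 = (t * D) ^ 2).
  { rewrite Rpow_mult_distr, Hrho. unfold rho_nat, D, Dn. unfold D, Dn in HD. field. lra. }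
  assert (HtD : 0 < t * D) by (apply Rmult_lt_0_compat; lra).
  rewrite HX.
  replace (INR (i + j) / 2) with (/ 2 * INR (i + j)) by (unfold Rdiv; ring).
  rewrite <- Rpower_mult, Rpower_sqrt by (apply pow_lt; lra).
  rewrite sqrt_pow2 by lra. rewrite Rpower_pow by lra.
  specialize (HB T D HD HD10 Hu Ht).
  unfold Fv. eapply Rle_trans. apply fst_le_Cmod. fold T. rewrite Cmod_mult, Cmod_ci, Rmult_1_l.
  assert (0 < (t * D) ^ (i + j)) by (apply pow_lt; lra).
  rewrite <- Hrho. apply Rmult_le_reg_r with ((t * D) ^ (i + j)); auto.
  unfold Rdiv. rewrite Rmult_assoc, Rinv_l by lra. rewrite Rmult_1_r. exact HB.
Qed.
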